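(* For each $k=1,\dots,n-3$ there exists a unique polynomial $\tilde F_k\in\mathbb C[x_0,\dots,x_n,y_1,\dots,y_m]$ such that (1) $\tilde F_k$ is quasi-homogeneous of multi-degree $(b_{0k},\dots,b_{mk})$, where $x_j$ has multi-degree $(w_j,a_{1j},\dots,a_{mj})$ and $y_i$ has multi-degree the $i$-th standard unit vector $(0,\dots,1,\dots,0)$ of $\mathbb Z^{m+1}$ (indices $0,\dots,m$); and (2) $\tilde F_k(x_0,\dots,x_n,1,\dots,1)=F_k(x_0,\dots,x_n)$.
   Context: Let $w_0,\dots,w_n$ be positive integers ($\gcd=1$), $X=V(F_1,\dots,F_{n-3})\subset\mathbb P(\vec w)=[(\mathbb C^{n+1}\setminus0)/\mathbb C^*]$ ($x_i$ of weight $w_i$) a smooth complete intersection, $F_j$ general quasi-homogeneous of degree $b_j$ with $\sum b_j=\sum w_i$, $X$ not in any linear subspace. For $\alpha\in\mathbb Q\cap[0,1)$, $C_\alpha=\{i:\alpha w_i\in\mathbb Z\}$, $\mathbb P_\alpha=\{x_i=0,i\notin C_\alpha\}$, $X_\alpha=X\cap\mathbb P_\alpha$, age $\iota_\alpha=\sum_j\lfloor\alpha b_j\rfloor-\sum_i\lfloor\alpha w_i\rfloor$; for $\dim X_\alpha=0$, $\Lambda\subset C_\alpha$: $U_\Lambda=\{x_k=0\ (k\in\Lambda),x_k\ne0\ (k\in C_\alpha\setminus\Lambda)\}\subset\mathbb P_\alpha$, $\overline{U_\Lambda}=\{x_k=0,k\in\Lambda\}$. Let $\phi_1,\dots,\phi_m$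 be (i) $\mathbf 1_{X_\alpha}$ for $\alpha\ne0$, $\dim X_\alpha=1$, $\iota_\alpha=1$; (ii) for $\alpha\ne0$, $\dim X_\alpha=0$, $\iota_\alpha=1$, the classes $\mathbf 1_{\overline{U_\Lambda}\cap X_\alpha}$ for $\Lambda$ with $U_\Lambda\cap X_\alpha\ne\emptyset$; $\alpha_i$ is the sector of $\phi_i$. If $\phi_i$ is of type (i): $a_{ij}=\lfloor\alpha_iw_j\rfloor$ ($0\le j\le n$), $b_{ik}=\lfloor\alpha_ib_k\rfloor$ ($1\le k\le n-3$). If $\phi_i=\mathbf 1_{\overline{U_\Lambda}\cap X_{\alpha_i}}$ is of type (ii): $a_{ij}=\lfloor\alpha_iw_j\rfloor-\delta_\Lambda(j)$, $b_{ik}=\lfloor\alpha_ib_k\rfloor-\delta_\Gamma(k)$, with $\Gamma=\{k:\alpha_ib_k\in\mathbb Z,F_k\text{ identically zero on }U_\Lambda\}$ and $\delta$ indicator functions. Also $b_{0k}=b_k$. *)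

(* Defs.v *)
From HB Require Import structures.
From mathcomp Require Import all_boot all_order all_algebra.
From mathcomp Require Import mpoly complex.
From Stdlib Require Import ClassicalEpsilon.
Set Implicit Arguments. Unset Strict Implicit. Unset Printing Implicit Defensive.
Import Order.TTheory GRing.Theory Num.Theory.
Local Open Scope ring_scope.

(* Sector data of one class phi_i:
   - Sec1 alpha         : type (i), 1_{X_alpha}
   - Sec2 alpha Lambda  : type (ii), 1_{closure(U_Lambda) cap X_alpha}          *)
Inductive sector (n : nat) :=
  | Sec1 of rat
  | Sec2 of rat & {set 'I_n.+1}.

Definition sec_alpha n (s : sector n) : rat :=
  match s with Sec1 a => a | Sec2 a _ => a end.

Definition Cset n (w : 'I_n.+1 -> nat) (alpha : rat) : {set 'I_n.+1} :=
  [set i | (alpha * (w i)%:R) \is a Num.int].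

Definition age n (w : 'I_n.+1 -> nat) (b : 'I_(n - 3) -> nat) (alpha : rat) : int :=
  (\sum_k Num.floor (alpha * (b k)%:R)) - \sum_i Num.floor (alpha * (w i)%:R).

(* x lies in the affine cone over U_Lambda inside P_alpha, and x <> 0 *)
Definition in_U n (C : ringType) (w : 'I_n.+1 -> nat) (alpha : rat)
    (Lam : {set 'I_n.+1}) (x : 'I_n.+1 -> C) : Prop :=
  [/\ exists i, x i != 0,
      forall i, i \notin Cset w alpha -> x i = 0,
      forall i, i \in Lam -> x i = 0 &
      forall i, i \in Cset w alpha -> i \notin Lam -> x i != 0].

Definition zero_on_U n (C : ringType) (w : 'I_n.+1 -> nat) (alpha : rat)
    (Lam : {set 'I_n.+1}) (F : {mpoly C[n.+1]}) : Prop :=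
  forall x : 'I_n.+1 -> C, in_U w alpha Lam x -> F.@[x] = 0.

Definition in_Gamma n (C : ringType) (w : 'I_n.+1 -> nat) (b : 'I_(n - 3) -> nat)
    (F : 'I_(n - 3) -> {mpoly C[n.+1]}) (alpha : rat) (Lam : {set 'I_n.+1})
    (k : 'I_(n - 3)) : bool :=
  ((alpha * (b k)%:R) \is a Num.int) &&
  (if excluded_middle_informative (zero_on_U w alpha Lam (F k)) then true else false).

Definition acoef n (w : 'I_n.+1 -> nat) (s : sector n) (j : 'I_n.+1) : int :=
  match s with
  | Sec1 a => Num.floor (a * (w j)%:R)
  | Sec2 a Lam => Num.floor (a * (w j)%:R) - (j \in Lam)%:Z
  end.

Definition bcoef n (C : ringType) (w : 'I_n.+1 -> nat) (b : 'I_(n - 3) -> nat)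
    (F : 'I_(n - 3) -> {mpoly C[n.+1]}) (s : sector n) (k : 'I_(n - 3)) : int :=
  match s with
  | Sec1 a => Num.floor (a * (b k)%:R)
  | Sec2 a Lam => Num.floor (a * (b k)%:R) - (in_Gamma w b F a Lam k)%:Z
  end.

Definition qhomog n (C : ringType) (w : 'I_n.+1 -> nat) (d : nat) (F : {mpoly C[n.+1]}) :=
  forall mon, mon \in msupp F -> (\sum_j w j * mon j)%N = d.

(* variables x_j (j = 0..n) are 'X_(lshift m j), y_(i+1) (i < m) are 'X_(rshift n.+1 i) *)
Definition mqhomog n m (C : ringType) (w : 'I_n.+1 -> nat) (a : 'I_m -> 'I_n.+1 -> int)
    (d0 : int) (d : 'I_m -> int) (P : {mpoly C[n.+1 + m]}) : Prop :=
  forall mon, mon \in msupp P ->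
    (\sum_j (w j)%:Z * (mon (lshift m j))%:Z = d0) /\
    (forall i : 'I_m,
        \sum_j a i j * (mon (lshift m j))%:Z + (mon (rshift n.+1 i))%:Z = d i).

Definition set_y1 n m (C : ringType) : (n.+1 + m).-tuple {mpoly C[n.+1]} :=
  [tuple match split i with inl j => 'X_j | inr _ => 1 end | i < n.+1 + m].

(* Main.v *)
Require Import Defs.
From HB Require Import structures.
From mathcomp Require Import all_boot all_order all_algebra.
From mathcomp Require Import mpoly complex.
From mathcomp Require Import ring zify.
From Stdlib Require Import ClassicalEpsilon.
Import Order.TTheory GRing.Theory Num.Theory.
Local Open Scope ring_scope.

Section Vanish.
Variable K : numDomainType.

Lemma coef_sumX N (r : seq 'X_{1..N}) (f : 'X_{1..N} -> K) k : uniq r ->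
  (\sum_(m <- r) f m *: 'X_[m])@_k = if k \in r then f k else 0.
Proof.
elim: r => [|a r IH] /=; first by rewrite big_nil mcoeff0.
case/andP=> anr ur; rewrite big_cons mcoeffD mcoeffZ mcoeffX IH // in_cons.
have [->|nka] := eqVneq k a; first by rewrite (negbTE anr) mulr1 addr0.
by rewrite mulr0 add0r.
Qed.

Lemma torus_zero N (p : {mpoly K[N]}) :
  (forall x : 'I_N -> K, (forall i, x i != 0) -> p.@[x] = 0) -> p = 0.
Proof.
move: {2}(size (msupp p)) (leqnn (size (msupp p))) => s.
elim: s p => [|s IH] p hs hp.
  apply/mpolyP => k; rewrite mcoeff0; apply/eqP; rewrite mcoeff_eq0.
  by move: hs; rewrite leqn0 => /nilP ->.
have up := msupp_uniq p.
case E: (msupp p) up hs => [|m1 [|m0 r]] up hs.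
- by apply/mpolyP => k; rewrite mcoeff0; apply/eqP; rewrite mcoeff_eq0 E.
- have := hp (fun _ => 1) (fun _ => oner_neq0 _).
  rewrite mevalE E big_seq1 big1 ?mulr1 => [h|i _]; last exact: expr1n.
  have : m1 \in msupp p by rewrite E mem_seq1.
  by rewrite mcoeff_msupp h eqxx.
have m01 : m0 != m1.
  by move: up => /= /andP[]; rewrite !inE negb_or => /andP[h _] _; rewrite eq_sym.
have [i hi] : exists i, m0 i != m1 i.
  case: (pickP (fun i => m0 i != m1 i)) => [i hi|h]; first by exists i.
  have e : m0 = m1 by apply/mnmP => j; apply/eqP; move: (h j) => /= /negbFE.
  by rewrite e eqxx in m01.
pose lam : K := 2%:R.
have lam0 : lam != 0 by rewrite pnatr_eq0.
have lamI a b : (lam ^+ a == lam ^+ b) = (a == b).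
  by rewrite /lam -!natrX eqr_nat eqn_exp2l.
pose q := \sum_(m <- msupp p) (p@_m * (lam ^+ m i - lam ^+ m1 i)) *: 'X_[m].
have qc k : q@_k = if k \in msupp p then p@_k * (lam ^+ k i - lam ^+ m1 i) else 0.
  by rewrite coef_sumX // msupp_uniq.
have q0 : q = 0.
  apply: IH.
    have sub : {subset msupp q <= m0 :: r}.
      move=> k; rewrite mcoeff_msupp qc.
      case: ifP => [|_]; last by rewrite eqxx.
      rewrite E inE => /orP[/eqP ->|//]; by rewrite subrr mulr0 eqxx.
    have := uniq_leq_size (msupp_uniq q) sub.
    by move=> h; apply: leq_trans h _.
  move=> x hx.
  pose x' := fun j => if j == i then lam * x j else x j.
  have hx' : forall j, x' j != 0.
    by move=> j; rewrite /x'; case: ifP => _ //; rewrite mulf_neq0.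
  have prodE (m : 'X_{1..N}) : \prod_j x' j ^+ m j = lam ^+ m i * \prod_j x j ^+ m j.
    rewrite (bigD1 i) //= [in RHS](bigD1 i) //= /x' eqxx exprMn mulrA; congr (_ * _).
    by apply: eq_bigr => j /negbTE ->.
  have h1 := hp x' hx'; have h2 := hp x hx.
  rewrite mevalE in h1; rewrite mevalE in h2.
  rewrite /q raddf_sum /=.
  transitivity (\sum_(m <- msupp p) p@_m * \prod_j x' j ^+ m j
       - lam ^+ m1 i * \sum_(m <- msupp p) p@_m * \prod_j x j ^+ m j); last first.
    by rewrite h1 h2 mulr0 subrr.
  rewrite mulr_sumr -sumrB; apply: eq_bigr => m _.
  rewrite mevalZ mevalX prodE; ring.
have : m0 \in msupp p by rewrite E !inE eqxx orbT.
move=> m0p; have := qc m0; rewrite q0 mcoeff0 m0p => /esym/eqP.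
by rewrite mulf_eq0 subr_eq0 lamI (negbTE hi) orbF mcoeff_eq0 m0p.
Qed.

Lemma sub_torus_zero N (G : {mpoly K[N]}) (P : pred 'I_N) :
  (forall x : 'I_N -> K, (exists i, x i != 0) -> (forall i, ~~ P i -> x i = 0) ->
     (forall i, P i -> x i != 0) -> G.@[x] = 0) ->
  forall mon : 'X_{1..N}, (exists j, mon j != 0%N) ->
    (forall j, ~~ P j -> mon j = 0%N) -> G@_mon = 0.
Proof.
move=> hG mon [j0 hj0] hmon.
have Pj0 : P j0 by apply: contraNT hj0 => /hmon ->.
pose Sup (m : 'X_{1..N}) := [forall j, ~~ P j ==> (m j == 0%N)].
pose G' := \sum_(m <- msupp G | Sup m) G@_m *: 'X_[m].
have G'0 : G' = 0.
  apply: torus_zero => x hx.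
  pose x0 := fun j => if P j then x j else 0.
  apply: (eq_trans _ (hG x0 _ _ _)).
  - rewrite [RHS]mevalE /G' raddf_sum /= big_mkcond /=.
    apply: eq_bigr => m _; case: ifP => [/forallP Sm|/negbT].
      rewrite mevalZ mevalX; congr (_ * _); apply: eq_bigr => j _.
      rewrite /x0; case: ifP => // /negbT nPj.
      by move/implyP: (Sm j) => /(_ nPj) /eqP ->; rewrite !expr0.
    move/forallPn => [j]; rewrite negb_imply => /andP[nPj mj].
    rewrite (bigD1 j) //= /x0 (negbTE nPj) expr0n (negbTE mj) mul0r mulr0.
    by [].
  - by exists j0; rewrite /x0 Pj0 hx.
  - by move=> i nPi; rewrite /x0 (negbTE nPi).
  - by move=> i Pi; rewrite /x0 Pi hx.
have := congr1 (mcoeff mon) G'0.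
rewrite /G' -big_filter coef_sumX ?filter_uniq ?msupp_uniq // mcoeff0 mem_filter.
case: ifP => [//|]; case: (boolP (mon \in msupp G)) => [_|]; last first.
  by move=> /memN_msupp_eq0.
rewrite andbT => /negbT/negP []; apply/forallP => j; apply/implyP => /hmon ->.
by [].
Qed.
End Vanish.

Lemma nonneg (R : rcfType) n (w : 'I_n.+1 -> nat) (b : 'I_(n - 3) -> nat)
  (F : 'I_(n - 3) -> {mpoly R[i][n.+1]}) (s : sector n) k (mon : 'X_{1..n.+1}) :
  (0 < b k)%N -> qhomog w (b k) (F k) -> mon \in msupp (F k) ->
  0 <= bcoef w b F s k - \sum_j acoef w s j * (mon j)%:Z.
Proof.
move=> bk0 hq hmon; have qh := hq mon hmon.
have sumE (a : rat) : \sum_j (a * (w j)%:R) * (mon j)%:R = a * (b k)%:R.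
  rewrite -qh natr_sum mulr_sumr; apply: eq_bigr => j _.
  by rewrite natrM mulrA.
have Sr (a : rat) : (\sum_j Num.floor (a * (w j)%:R) * (mon j)%:Z)%:~R
    = \sum_j (Num.floor (a * (w j)%:R))%:~R * (mon j)%:R :> rat.
  by rewrite rmorph_sum; apply: eq_bigr => j _ /=; rewrite rmorphM.
have key (a : rat) : \sum_j Num.floor (a * (w j)%:R) * (mon j)%:Z <= Num.floor (a * (b k)%:R).
  rewrite floor_ge_int Sr -sumE; apply: ler_sum => j _.
  by apply: ler_wpM2r; [exact: ler0n | exact: floor_le].
case: s => [al|al Lam] /=.
  by rewrite subr_ge0; exact: key.
pose fl j := Num.floor (al * (w j)%:R).
pose S := \sum_j fl j * (mon j)%:Z.
have {key} key : S <= Num.floor (al * (b k)%:R) by exact: key.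
pose L := \sum_j (j \in Lam)%:Z * (mon j)%:Z.
have L0 : 0 <= L by apply: sumr_ge0 => j _; apply: mulr_ge0.
have -> : \sum_j (Num.floor (al * (w j)%:R) - (j \in Lam)%:Z) * (mon j)%:Z = S - L.
  by rewrite -sumrB; apply: eq_bigr => j _; rewrite mulrBl.
case G: (in_Gamma w b F al Lam k); last by rewrite /= subr0; lia.
have [Lp|Ln] := ltP 0 L; first by lia.
have {Ln}L0' : L = 0 by apply/eqP; rewrite eq_le Ln L0.
have [Slt|Sge] := ltP S (Num.floor (al * (b k)%:R)); first by lia.
exfalso.
have SE : S = Num.floor (al * (b k)%:R) by apply/eqP; rewrite eq_le key Sge.
move: G; rewrite /in_Gamma => /andP[aint].
case: excluded_middle_informative => // zU _.
move: hmon; rewrite mcoeff_msupp => /negP; apply; apply/eqP.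
apply: (@sub_torus_zero _ _ _ (fun j => (j \in Cset w al) && (j \notin Lam))).
- move=> x hx h1 h2; apply: zU; split => //.
  + by move=> i hi; apply: h1; rewrite (negbTE hi).
  + by move=> i hi; apply: h1; rewrite hi andbF.
  + by move=> i hi hi'; apply: h2; rewrite hi hi'.
- case: (pickP (fun j => mon j != 0%N)) => [j hj|h]; first by exists j.
  exfalso; move: bk0; rewrite -qh big1 // => j _.
  by move: (h j) => /= /negbFE /eqP ->; rewrite muln0.
- move=> j; rewrite negb_and negbK => /orP[njC|jL]; last first.
    have hL := @psumr_eq0P _ _ xpredT (fun j => (j \in Lam)%:Z * (mon j)%:Z)
      (fun i _ => ltac:(by apply: mulr_ge0)) L0' j isT.
    by move: hL; rewrite jL /= mul1r => -[].
  have h0 : \sum_j (al * (w j)%:R - (fl j)%:~R) * (mon j)%:R = 0 :> rat.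
    rewrite (eq_bigr (fun j => al * (w j)%:R * (mon j)%:R - (fl j)%:~R * (mon j)%:R)).
      by rewrite sumrB sumE -Sr -/S SE floorK // subrr.
    by move=> i _; rewrite mulrBl.
  have h1 : forall i : 'I_n.+1, xpredT i -> 0 <= (al * (w i)%:R - (fl i)%:~R) * (mon i)%:R.
    move=> i _; apply: mulr_ge0 => //; rewrite subr_ge0; exact: floor_le.
  have := @psumr_eq0P _ _ xpredT _ h1 h0 j isT => /eqP; rewrite mulf_eq0 => /orP[|].
    rewrite subr_eq0 => /eqP e; move: njC; rewrite inE e intr_int //.
  by rewrite pnatr_eq0 => /eqP.
Qed.
Set Implicit Arguments. Unset Strict Implicit.

Lemma split_lshift m n (j : 'I_m) : split (lshift n j) = inl j.
Proof. exact: (unsplitK (inl _ j)). Qed.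
Lemma split_rshift m n (j : 'I_n) : split (rshift m j) = inr j.
Proof. exact: (unsplitK (inr _ j)). Qed.

Section Lift.
Variables (K : numDomainType) (n m : nat).

Definition px (M : 'X_{1..n.+1 + m}) : 'X_{1..n.+1} := [multinom M (lshift m j) | j < n.+1].

Lemma compX (M : 'X_{1..n.+1 + m}) :
  ('X_[M] : {mpoly K[n.+1 + m]}) \mPo set_y1 n m K = 'X_[px M].
Proof.
rewrite comp_mpolyX big_split_ord /= [X in _ * X]big1 ?mulr1; last first.
  by move=> i _; rewrite /set_y1 tnth_mktuple split_rshift expr1n.
rewrite [RHS]mpolyXE_id; apply: eq_bigr => j _.
by rewrite /set_y1 tnth_mktuple split_lshift mnmE.
Qed.

Variables (A : 'I_m -> 'I_n.+1 -> int) (d : 'I_m -> int).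

Definition ey (mon : 'X_{1..n.+1}) (i : 'I_m) : nat :=
  absz ((d i - \sum_j A i j * (mon j)%:Z)%R).

Definition liftm (mon : 'X_{1..n.+1}) : 'X_{1..n.+1 + m} :=
  [multinom match split t with inl j => mon j | inr i => ey mon i end | t < n.+1 + m].

Lemma liftm_l mon j : liftm mon (lshift m j) = mon j.
Proof. by rewrite mnmE split_lshift. Qed.
Lemma liftm_r mon i : liftm mon (rshift n.+1 i) = ey mon i.
Proof. by rewrite mnmE split_rshift. Qed.
Lemma px_liftm mon : px (liftm mon) = mon.
Proof. by apply/mnmP => j; rewrite mnmE liftm_l. Qed.

Definition Qy (M : 'X_{1..n.+1 + m}) :=
  forall i : 'I_m, \sum_j A i j * (M (lshift m j))%:Z + (M (rshift n.+1 i))%:Z = d i.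

Lemma Qy_inj M1 M2 : Qy M1 -> Qy M2 -> px M1 = px M2 -> M1 = M2.
Proof.
move=> h1 h2 e; apply/mnmP => t; rewrite -(splitK t).
case: (split t) => [j|i] /=.
  by have := congr1 (fun M : 'X_{1..n.+1} => M j) e; rewrite !mnmE.
have e' : forall j, M1 (lshift m j) = M2 (lshift m j).
  by move=> j; have := congr1 (fun M : 'X_{1..n.+1} => M j) e; rewrite !mnmE.
have := h1 i; rewrite -(h2 i) (eq_bigr (fun j => A i j * (M2 (lshift m j))%:Z)).
  by move/addrI => [].
by move=> j _; rewrite e'.
Qed.

End Lift.

Unset Implicit Arguments. Set Strict Implicit.

Theorem lemma3p8 (R : rcfType) (n m : nat)
    (w : 'I_n.+1 -> nat) (b : 'I_(n - 3) -> nat)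
    (F : 'I_(n - 3) -> {mpoly R[i][n.+1]})
    (phi : 'I_m -> sector n) :
  (forall j, (0 < w j)%N) ->
  \big[gcdn/0%N]_j w j = 1%N ->
  (forall k, (0 < b k)%N) ->
  (\sum_k b k = \sum_j w j)%N ->
  (forall k, qhomog w (b k) (F k)) ->
  (forall i, let alpha := sec_alpha (phi i) in
     [/\ 0 < alpha, alpha < 1 & age w b alpha = 1]) ->
  (forall i alpha Lam, phi i = Sec2 alpha Lam ->
     Lam \subset Cset w alpha /\
     exists x : 'I_n.+1 -> R[i], in_U w alpha Lam x /\ forall k, (F k).@[x] = 0) ->
  forall k : 'I_(n - 3),
    exists! Ft : {mpoly R[i][n.+1 + m]},
      mqhomog w (fun i => acoef w (phi i)) (b k)%:Z
              (fun i => bcoef w b F (phi i) k) Ft /\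
      Ft \mPo (set_y1 n m R[i]) = F k.
Proof.
move=> _ _ hb _ hq _ _ k.
pose A := fun i => acoef w (phi i).
pose d := fun i => bcoef w b F (phi i) k.
pose L := liftm A d.
pose Ft := \sum_(mon <- msupp (F k)) (F k)@_mon *: ('X_[L mon] : {mpoly R[i][n.+1 + m]}).
have coefFt M : Ft@_M = \sum_(mon <- msupp (F k)) (F k)@_mon * (L mon == M)%:R.
  by rewrite /Ft raddf_sum; apply: eq_bigr => mon _ /=; rewrite mcoeffZ mcoeffX.
have HQ : mqhomog w A (b k)%:Z d Ft.
  move=> M HM.
  have /hasP [mon hmon /eqP <-] : has (fun mon => L mon == M) (msupp (F k)).
    move: HM; rewrite mcoeff_msupp; apply: contraNT => /hasPn h.
    by rewrite coefFt big1_seq // => mon /andP[_ hm]; rewrite (negbTE (h _ hm)) mulr0.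
  split.
    rewrite -(hq k mon hmon) (eq_bigr (fun j => ((w j * mon j)%N : int))).
      by rewrite (big_morph _ PoszD (erefl _)).
    by move=> j _; rewrite /L liftm_l.
  move=> i; rewrite /L liftm_r /ey (eq_bigr (fun j => A i j * (mon j)%:Z)).
    rewrite abszE ger0_norm; first by rewrite addrC subrK.
    exact: nonneg.
  by move=> j _; rewrite liftm_l.
have HC : Ft \mPo set_y1 n m R[i] = F k.
  rewrite /Ft raddf_sum [RHS]mpolyE; apply: eq_bigr => mon _ /=.
  by rewrite comp_mpolyZ compX /L px_liftm.
exists Ft; split; first by split.
move=> Ft' [HQ' HC'].
apply/eqP; rewrite -subr_eq0; apply/eqP.
set D := Ft - Ft'.
have QD : forall M, M \in msupp D -> Qy A d M.
  move=> M; rewrite mcoeff_msupp mcoeffB.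
  case: (boolP (Ft@_M == 0)) => [/eqP -> |h1].
    rewrite sub0r oppr_eq0 -mcoeff_msupp => /HQ' [_ h] i; exact: h.
  by move=> _ i; have [_ h] := HQ M ltac:(by rewrite mcoeff_msupp); exact: h.
have DC : D \mPo set_y1 n m R[i] = 0 by rewrite /D comp_mpolyB HC HC' subrr.
case E: (msupp D) => [|M0 r].
  by rewrite (mpolyE D) E big_nil.
have M0D : M0 \in msupp D by rewrite E mem_head.
exfalso; move: M0D; rewrite mcoeff_msupp => /negP; apply; apply/eqP.
have := congr1 (mcoeff (px M0)) DC.
have DCE : D \mPo set_y1 n m R[i] = \sum_(M <- msupp D) D@_M *: 'X_[px M].
  by rewrite {1}(mpolyE D) raddf_sum; apply: eq_bigr => M _ /=; rewrite comp_mpolyZ compX.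
rewrite DCE mcoeff0 raddf_sum /=.
rewrite (bigD1_seq M0) ?msupp_uniq //=; last by rewrite E mem_head.
rewrite mcoeffZ mcoeffX eqxx mulr1 big1_seq ?addr0 //.
move=> M /andP[nM MD]; rewrite mcoeffZ mcoeffX.
case: eqP => [e|]; last by rewrite mulr0.
by move/eqP: nM; case; apply: Qy_inj e; apply: QD; rewrite // E mem_head.
Qed.
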